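(* Let $G$ be a left (resp. right) topological group and let $H$ be a closed subgroup of $G$. Then $\mathrm{r}_{\mathcal C_1}H=\mathrm{r}_{(G,\mathcal C_1)}(H)$; that is, the map $\mathrm{r}_{\mathcal C_1}H\to\mathrm{r}_{\mathcal C_1}G$ induced by the inclusion $H\hookrightarrow G$ is a homeomorphism of $\mathrm{r}_{\mathcal C_1}H$ onto the subspace $\mathrm{r}_{(G,\mathcal C_1)}(H)$ of $\mathrm{r}_{\mathcal C_1}G$.
   Context: A left (resp. right) topological group is a group with a topology in which all left translations $x\mapsto ax$ (resp. right translations $x\mapsto xa$) are continuous. $\mathcal C_1$ is the epireflective subcategory of $\mathbf{Top}$ of $T_1$ spaces; $\mathrm{r}_{\mathcal C_1}X$ is the $T_1$-reflection of a space $X$, with universal continuous surjection $\mathrm{r}_{(X,\mathcal C_1)}\colon X\to\mathrm{r}_{\mathcal C_1}X$ through which every continuous map from $X$ into a $T_1$ space factors uniquely. *)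

(* Defs.v *)
From HB Require Import structures.
From mathcomp Require Import all_boot all_order all_algebra.
From mathcomp Require Import all_classical all_reals all_analysis.
Set Implicit Arguments. Unset Strict Implicit. Unset Printing Implicit Defensive.
Local Open Scope classical_set_scope.

Definition is_group {G : Type} (mul : G -> G -> G) (inv : G -> G) (one : G) :=
  [/\ forall x y z, mul x (mul y z) = mul (mul x y) z,
      forall x, mul one x = x, forall x, mul x one = x,
      forall x, mul (inv x) x = one & forall x, mul x (inv x) = one].

Definition left_topological_group {G : topologicalType}
  (mul : G -> G -> G) (inv : G -> G) (one : G) :=
  is_group mul inv one /\ forall a : G, continuous (fun x => mul a x).

Definition right_topological_group {G : topologicalType}
  (mul : G -> G -> G) (inv : G -> G) (one : G) :=
  is_group mul inv one /\ forall a : G, continuous (fun x => mul x a).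

Definition is_subgroup {G : Type} (mul : G -> G -> G) (inv : G -> G) (one : G)
  (H : set G) :=
  [/\ H one, forall x y, H x -> H y -> H (mul x y) & forall x, H x -> H (inv x)].

Definition T1_reflection {X Y : topologicalType} (q : X -> Y) :=
  [/\ accessible_space Y, continuous q, (forall y : Y, exists x : X, q x = y) &
      forall (Z : topologicalType) (f : X -> Z), accessible_space Z ->
        continuous f ->
        exists! g : Y -> Z, continuous g /\ f = g \o q].

Definition homeomorphism_onto {X Y : topologicalType} (f : X -> Y) (A : set Y) :=
  exists (h : X -> set_type A) (k : set_type A -> X),
    [/\ cancel h k, cancel k h, continuous h, continuous k &
        f = set_val \o h].

(* Main.v *)
Require Import Defs.
From HB Require Import structures.
From mathcomp Require Import all_boot all_order all_algebra.
From mathcomp Require Import all_classical all_reals all_analysis.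
Set Implicit Arguments. Unset Strict Implicit. Unset Printing Implicit Defensive.
Local Open Scope classical_set_scope.

Definition qspace (X : topologicalType) (p : X -> set X) : Type := set X.
Section QS.
Context (X : topologicalType) (p : X -> set X).
Local Notation Q := (qspace p).
HB.instance Definition _ := Choice.on Q.
Definition qopen (U : set Q) := open (p @^-1` U).
Program Definition qmixin := @isOpenTopological.Build Q qopen _ _ _.
Next Obligation. by rewrite /qopen preimage_setT; exact: openT. Qed.
Next Obligation. by move=> ? ? ? ?; exact: openI. Qed.
Next Obligation. by move=> I f ofi; apply: bigcup_open => i _; exact: ofi. Qed.
HB.instance Definition _ := qmixin.

Lemma q_cont : continuous (p : X -> Q).
Proof. by apply/continuousP. Qed.

Lemma q_closed (U : set Q) : closed (p @^-1` U) -> closed U.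
Proof.
by move=> cU; rewrite -openC /open /= /qopen preimage_setC openC.
Qed.

Lemma q_T1 : (forall x, closed [set y | p y = p x]) -> accessible_space Q.
Proof.
move=> hc x y xy; exists (~` [set y]); split; last first.
- by rewrite inE /=.
- by rewrite inE /=; apply/eqP.
rewrite openC; apply: q_closed.
have [[x0 <-]|ny] := pselect (exists x0, p x0 = y).
  exact: hc.
suff -> : p @^-1` [set y] = set0 by exact: closed0.
by apply/seteqP; split => z //= pz; apply: ny; exists z.
Qed.
End QS.

Section Refl.
Context (X R : topologicalType) (q : X -> R) (hq : T1_reflection q).

Lemma refl_inv (phi : X -> X) : continuous phi ->
  forall x y, q x = q y -> q (phi x) = q (phi y).
Proof.
move=> cphi x y e; case: hq => T1R cq _ univ.
have [g [[cg eg] _]] := univ R (q \o phi) T1R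
  (fun z => continuous_comp (cphi z) (cq (phi z))).
by rewrite -[q (phi x)]/((q \o phi) x) -[q (phi y)]/((q \o phi) y) eg /= e.
Qed.

Lemma refl_closed (C : set X) : closed C ->
  (forall x c, C c -> q x = q c -> C x) -> closed (q @` C).
Proof.
move=> cC sat; case: hq => T1R cq surj univ.
pose p := fun x : X => [set y | q y = q x].
have pE x y : p x = p y <-> q x = q y.
  split=> [e|e]; last by rewrite /p e.
  have : p y x by rewrite -e.
  by rewrite /p /= => ->.
have T1Q : accessible_space (qspace p).
  apply: q_T1 => x.
  have -> : [set y | p y = p x] = q @^-1` [set q x].
    by apply/seteqP; split => y /= /pE.
  apply: preimage_closed; first by move=> z _; exact: cq.
  exact: accessible_closed_set1.
have [g [[cg eg] _]] := univ (qspace p) (p : X -> qspace p) T1Q (@q_cont X p).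
have -> : q @` C = g @^-1` ((p : X -> qspace p) @` C).
  apply/seteqP; split => y.
    case=> c Cc <- /=; exists c => //.
    by rewrite -[g (q c)]/((g \o q) c) -eg.
  rewrite /=; case=> c Cc; have [x <-] := surj y.
  rewrite -[g (q x)]/((g \o q) x) -eg => /pE e.
  by exists x => //; apply: (sat x c Cc); rewrite e.
apply: preimage_closed; first by move=> z _; exact: cg.
apply: (@q_closed X p).
match goal with |- closed ?S => have -> : S = C end.
  apply/seteqP; split => x /=.
    by case=> c Cc /pE e; apply: (sat x c Cc); rewrite e.
  by move=> Cx; exists x.
exact: cC.
Qed.
End Refl.

Section Grp.
Context {G : Type} (mul : G -> G -> G) (inv : G -> G) (one : G)
  (hg : is_group mul inv one).

Lemma g_mulA x y z : mul x (mul y z) = mul (mul x y) z.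
Proof. by case: hg. Qed.
Lemma g_mul1 x : mul one x = x. Proof. by case: hg. Qed.
Lemma g_mulg1 x : mul x one = x. Proof. by case: hg. Qed.
Lemma g_mulV x : mul (inv x) x = one. Proof. by case: hg. Qed.
Lemma g_mulgV x : mul x (inv x) = one. Proof. by case: hg. Qed.
Lemma g_invK x y : mul (inv x) (mul x y) = y.
Proof. by rewrite g_mulA g_mulV g_mul1. Qed.
Lemma g_Kinv x y : mul x (mul (inv x) y) = y.
Proof. by rewrite g_mulA g_mulgV g_mul1. Qed.
Lemma g_inv_uniq a b : mul a b = one -> inv a = b.
Proof. by move=> e; rewrite -[inv a]g_mulg1 -e g_invK. Qed.
Lemma g_inv1 : inv one = one.
Proof. by apply: g_inv_uniq; rewrite g_mul1. Qed.
Lemma g_invM x y : inv (mul (inv x) y) = mul (inv y) x.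
Proof.
apply: g_inv_uniq; rewrite -g_mulA (g_mulA y) g_mulgV g_mul1 g_mulV //.
Qed.

Lemma coset_eq (K : set G) (hK : is_subgroup mul inv one K) x y :
  [set z | K (mul (inv x) z)] = [set z | K (mul (inv y) z)] <->
  K (mul (inv x) y).
Proof.
case: hK => K1 KM KV; split=> [e|k].
  have : [set z | K (mul (inv y) z)] y by rewrite /= g_mulV.
  by rewrite -e.
apply/seteqP; split => z /= hz.
  have -> : mul (inv y) z = mul (mul (inv y) x) (mul (inv x) z).
    by rewrite -g_mulA g_Kinv.
  by apply: KM => //; rewrite -g_invM; apply: KV.
have -> : mul (inv x) z = mul (mul (inv x) y) (mul (inv y) z).
  by rewrite -g_mulA g_Kinv.
exact: KM.
Qed.
End Grp.

Lemma closed_val (X : topologicalType) (H : set X) (cH : closed H)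
  (U : set (set_type H)) : closed U -> closed (set_val @` U).
Proof.
rewrite -openC => -[V oV eV].
have -> : set_val @` U = H `&` ~` V.
  apply/seteqP; split => x.
    case=> z Uz <-; split; first exact: set_valP.
    move=> Vz; have : (~` U) z by rewrite -eV.
    by apply.
  case=> Hx nVx; exists (exist _ x (mem_set Hx)) => //.
  apply: contrapT => nU; apply: nVx.
  have : (~` U) (exist _ x (mem_set Hx)) by [].
  by rewrite -eV.
exact: closedI cH (open_closedC oV).
Qed.

Section MainLeft.
Context (G : topologicalType) (mul : G -> G -> G) (inv : G -> G) (one : G)
  (hg : is_group mul inv one) (cL : forall a, continuous (mul a))
  (H : set G) (hH : is_subgroup mul inv one H) (cH : closed H)
  (RH : topologicalType) (qH : set_type H -> RH) (hqH : T1_reflection qH)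
  (RG : topologicalType) (qG : G -> RG) (hqG : T1_reflection qG)
  (i : RH -> RG) (ci : continuous i) (hi : i \o qH = qG \o set_val).

Let H1 : H one. Proof. by case: hH. Qed.
Let HM x y : H x -> H y -> H (mul x y). Proof. by case: hH => _ + _; apply. Qed.
Let HV x : H x -> H (inv x). Proof. by case: hH => _ _; apply. Qed.

Definition inH x (hx : H x) : set_type H := exist _ x (mem_set hx).
Definition oneH := inH H1.
Definition ltr (a z : set_type H) : set_type H :=
  inH (HM (set_valP a) (set_valP z)).

Lemma ltr_cont a : continuous (ltr a).
Proof.
apply: (@continuous_comp_initial _ _ _ set_val) => z.
apply: (@continuous_comp _ _ _ set_val (mul (set_val a))).
  exact: initial_continuous.
exact: (@cL _).
Qed.

Lemma ltr1 a : ltr a oneH = a.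
Proof. by apply: val_inj; rewrite /= (g_mulg1 hg). Qed.

Definition K := set_val @` (qH @^-1` [set qH oneH]).

Lemma K_closed : closed K.
Proof.
rewrite /K; apply: (closed_val cH); case: hqH => T1 cq _ _.
apply: preimage_closed; first by move=> z _; exact: cq.
exact: accessible_closed_set1.
Qed.

Lemma K_sub : is_subgroup mul inv one K.
Proof.
split.
- by exists oneH.
- move=> _ _ [z hz <-] [w hw <-]; exists (ltr z w) => //=.
  by rewrite (refl_inv hqH (@ltr_cont z) hw) ltr1.
- move=> _ [z hz <-]; exists (inH (HV (set_valP z))) => //=.
  set u := inH _.
  have := refl_inv hqH (@ltr_cont u) hz; rewrite ltr1 => <-.
  by congr qH; apply: val_inj; rewrite /= (g_mulV hg).
Qed.

Lemma NK x : qG x = qG one -> K x.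
Proof.
move=> e; pose p := fun x => [set z | K (mul (inv x) z)].
have T1Q : accessible_space (qspace p).
  apply: q_T1 => y.
  have -> : [set y0 | p y0 = p y] = mul (inv y) @^-1` K.
    apply/seteqP; split => z /=.
      by move=> /esym /(coset_eq hg K_sub).
    by move=> /(coset_eq hg K_sub) /esym.
  apply: preimage_closed; first by move=> z _; exact: (@cL _).
  exact: K_closed.
case: hqG => _ _ _ univ.
have [g [[cg eg] _]] := univ (qspace p) (p : G -> qspace p) T1Q (@q_cont G p).
have : p one = p x.
  by rewrite -[p one]/((p : G -> qspace p) one) eg /= -e.
by move/(coset_eq hg K_sub); rewrite (g_inv1 hg) (g_mul1 hg).
Qed.

Lemma relG a x y : qG x = qG y -> qG (mul a x) = qG (mul a y).
Proof. move=> e. exact: (@refl_inv _ _ qG hqG (mul a) (@cL a) x y e). Qed.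

Lemma injH (z w : set_type H) : qG (set_val z) = qG (set_val w) -> qH z = qH w.
Proof.
move=> /(relG (inv (set_val z))); rewrite (g_mulV hg) => /esym /NK [u hu eu].
have := refl_inv hqH (@ltr_cont z) hu; rewrite ltr1 => <-.
congr qH; apply: val_inj => /=.
have eu' : sval u = mul (inv (sval z)) (sval w) := eu.
by rewrite eu' (g_Kinv hg).
Qed.

Lemma main_left : homeomorphism_onto i (qG @` H).
Proof.
case: hqH => T1H cqH surjH _.
have hP r : i r \in qG @` H.
  have [x <-] := surjH r; apply/mem_set; exists (set_val x).
    exact: set_valP.
  by have := congr1 (fun f => f x) hi.
pose h := fun r => exist _ (i r) (hP r) : set_type (qG @` H).
pose k := fun y : set_type (qG @` H) =>
  let: exist2 x hx _ := cid2 (set_valP y) in qH (inH hx).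
have hk : cancel h k.
  move=> r; rewrite /k; case: cid2 => x hx /= e.
  have [x0 e0] := surjH r; rewrite -e0; apply: injH => /=.
  by rewrite e -e0; have := congr1 (fun f => f x0) hi.
have kh : cancel k h.
  move=> y; apply: val_inj; rewrite /= /k; case: cid2 => x hx e.
  by rewrite -e; have := congr1 (fun f => f (inH hx)) hi.
exists h, k; split => //.
- apply: (@continuous_comp_initial _ _ _ set_val) => r.
  exact: ci.
- apply/continuousP => A oA.
  rewrite -[A]setCK preimage_setC openC.
  set C' := ~` A.
  have cC' : closed C' by exact: open_closedC.
  pose S := set_val @` (qH @^-1` C').
  have cS : closed S.
    rewrite /S; apply: (closed_val cH); apply: preimage_closed.
      by move=> z _; exact: cqH.
    exact: cC'.
  have satS : forall x c, S c -> qG x = qG c -> S x.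
    move=> x _ [u hu <-] e.
    have /(relG (inv (set_val u))) : qG x = qG (set_val u) by [].
    rewrite (g_mulV hg) => /NK [v _ ev].
    have Hx : H x.
      rewrite -(g_Kinv hg (set_val u) x) -ev.
      exact: HM (set_valP u) (set_valP v).
    exists (inH Hx) => //=.
    by rewrite /= (injH (z := inH Hx) (w := u)).
  match goal with |- closed ?S0 => have -> : S0 = set_val @^-1` (qG @` S) end.
    apply/seteqP; split => y /=.
      rewrite /k; case: cid2 => x hx e hC.
      by exists x => //; exists (inH hx).
    case=> _ [u hu <-] e; rewrite /k; case: cid2 => x hx e'.
    rewrite (injH (z := inH hx) (w := u)) //=.
    by rewrite e e'.
  apply: preimage_closed.
    by move=> z _; exact: initial_continuous.
  exact: (refl_closed hqG cS satS).
Qed.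
End MainLeft.

Lemma right_to_left (G : topologicalType) (mul : G -> G -> G) inv (one : G) :
  right_topological_group mul inv one ->
  left_topological_group (fun x y => mul y x) inv one.
Proof.
case=> -[mA m1 m1' mV mV'] cR; split; last by move=> a; exact: (cR a).
by split=> // x y z; rewrite mA.
Qed.

Lemma subgroup_op (G : Type) (mul : G -> G -> G) inv (one : G) H :
  is_subgroup mul inv one H -> is_subgroup (fun x y => mul y x) inv one H.
Proof. by case=> h1 hM hV; split=> // x y hx hy; exact: hM. Qed.

Theorem corollary5p11 (G : topologicalType) (mul : G -> G -> G) (inv : G -> G)
  (one : G)
  (hG : left_topological_group mul inv one \/ right_topological_group mul inv one)
  (H : set G) (hH : is_subgroup mul inv one H) (cH : closed H)
  (RH : topologicalType) (qH : set_type H -> RH) (hqH : T1_reflection qH)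
  (RG : topologicalType) (qG : G -> RG) (hqG : T1_reflection qG)
  (i : RH -> RG) (ci : continuous i) (hi : i \o qH = qG \o set_val) :
  homeomorphism_onto i (qG @` H).
Proof.
case: hG => [[hg cL]|hR].
  exact: (@main_left G mul inv one hg cL H hH cH RH qH hqH RG qG hqG i ci hi).
have [hg cL] := right_to_left hR.
exact: (@main_left G (fun x y => mul y x) inv one hg cL H (subgroup_op hH) cH
  RH qH hqH RG qG hqG i ci hi).
Qed.
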